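(* For every $1$-Sperner hypergraph ${\cal H}=(V,{\cal E})$ with $|V|\ge2$ and without universal vertices, isolated vertices, and twin vertices, we have $|{\cal E}|\ge\left\lceil\frac{|V|+2}{2}\right\rceil$. This bound is sharp: for every $k\ge2$ there is such a hypergraph with $|V|=2^k-2$ and $|{\cal E}|=2^{k-1}=\left\lceil\frac{|V|+2}{2}\right\rceil$.
   Context: A hypergraph ${\cal H}=(V,{\cal E})$ consists of a finite vertex set $V$ and a set ${\cal E}$ of subsets of $V$. It is $1$-Sperner if every two distinct hyperedges $e,f$ satisfy $\min\{|e\setminus f|,|f\setminus e|\}=1$. A vertex is universal (resp. isolated) if it belongs to all (resp. no) hyperedges; two distinct vertices are twins if they belong to exactly the same hyperedges. *)

(* Defs.v *)
From mathcomp Require Import all_boot.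
Set Implicit Arguments. Unset Strict Implicit. Unset Printing Implicit Defensive.

Definition one_sperner (V : finType) (E : {set {set V}}) : Prop :=
  forall e f, e \in E -> f \in E -> e != f ->
    minn #|e :\: f| #|f :\: e| = 1.

Definition universal_vertex (V : finType) (E : {set {set V}}) (v : V) : Prop :=
  forall e, e \in E -> v \in e.

Definition isolated_vertex (V : finType) (E : {set {set V}}) (v : V) : Prop :=
  forall e, e \in E -> v \notin e.

Definition twins (V : finType) (E : {set {set V}}) (u v : V) : Prop :=
  u != v /\ forall e, e \in E -> (u \in e) = (v \in e).

Definition reduced_hypergraph (V : finType) (E : {set {set V}}) : Prop :=
  (forall v, ~ universal_vertex E v) /\
  (forall v, ~ isolated_vertex E v) /\
  (forall u v, ~ twins E u v).

Definition ceil_half (a : nat) : nat := (a + 1) %/ 2.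

(* Main.v *)
Require Import Defs.
From mathcomp Require Import all_boot zify.
Set Implicit Arguments. Unset Strict Implicit. Unset Printing Implicit Defensive.

Section Part1.
Variable V : finType.

Definition sig (E : {set {set V}}) (v : V) : {set {set V}} := [set e in E | v \in e].
Definition SS (E : {set {set V}}) : {set {set {set V}}} :=
  set0 |: (E |: [set sig E v | v : V]).

Lemma SS_sub E : SS E \subset powerset E.
Proof.
apply/subsetP => s; rewrite !inE => /orP[/eqP->|/orP[/eqP->|/imsetP[v _ ->]]].
- by apply/subsetP => x; rewrite inE.
- by [].
- by apply/subsetP => x; rewrite inE => /andP[].
Qed.

Lemma one_sperner_sub (E F : {set {set V}}) : F \subset E -> one_sperner E -> one_sperner F.
Proof. move=> /subsetP sFE H e f eF fF; exact: H (sFE _ eF) (sFE _ fF). Qed.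

Lemma card2_le (A : {set V}) u v : u != v -> u \in A -> v \in A -> 2 <= #|A|.
Proof.
move=> uv uA vA; have : [set u; v] \subset A by apply/subsetP => x; rewrite !inE => /orP[]/eqP->.
by move/subset_leq_card; rewrite cards2 uv.
Qed.

Lemma step (E : {set {set V}}) e :
  one_sperner E -> e \in E -> (forall f, f \in E -> #|e| <= #|f|) ->
  #|SS E| <= #|SS (E :\ e)| + 2.
Proof.
move=> hS eE emin.
have small : forall f, f \in E -> f != e -> #|e :\: f| <= 1.
  move=> f fE fe; rewrite leqNgt; apply/negP => h2.
  rewrite eq_sym in fe; have := hS _ _ eE fE fe.
  have := cardsID f e; have := cardsID e f; rewrite setIC => h3 h4.
  have := emin _ fE; lia.
pose X := [set s in SS E | (e \in s) && (s :\ e \in SS E)].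
have charX : forall s, s \in X -> s != E -> exists u, [/\ u \in e, s = sig E u &
    forall f g, f \in E -> g \in E -> f != e -> g != e -> u \notin f -> u \in g ->
      exists v, [/\ v \notin e, v \in g & v \notin f]].
  move=> s; rewrite inE => /andP[sS /andP[es sdS]] sE.
  move: sS; rewrite !inE (negbTE sE) => /orP[/eqP s0|/imsetP[u _ su]].
    by move: es; rewrite s0 inE.
  have ue : u \in e by move: es; rewrite su inE => /andP[].
  exists u; split => //.
  move=> f g fE gE fe ge uf ug.
  move: sdS; rewrite !inE => /orP[/eqP s0|/orP[/eqP sE'|/imsetP[v _ sv]]].
  - have : g \in s :\ e by rewrite su !inE ge gE ug.
    by rewrite s0 inE.
  - have : e \in s :\ e by rewrite sE'.
    by rewrite !inE eqxx.
  - have vf : forall h, h \in E -> h != e -> (v \in h) = (u \in h).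
      move=> h hE he; have := congr1 (fun A : {set {set V}} => h \in A) sv.
      by rewrite su !inE he hE /= => <-.
    exists v; split.
    + have : e \notin s :\ e by rewrite !inE eqxx.
      by rewrite sv !inE eE.
    + by rewrite vf.
    + by rewrite vf.
have uniqX : forall s1 s2, s1 \in X -> s2 \in X -> s1 != E -> s2 != E -> s1 = s2.
  move=> s1 s2 s1X s2X s1E s2E.
  have [u1 [u1e s1u W1]] := charX _ s1X s1E.
  have [u2 [u2e s2u W2]] := charX _ s2X s2E.
  rewrite s1u s2u; case: (eqVneq u1 u2) => [->//|u12].
  have notall : forall u s, s = sig E u -> s != E -> exists2 f, f \in E & u \notin f.
    move=> u s -> sE; apply/exists_inP; apply: contraR sE => /exists_inPn H.
    apply/eqP/setP => f; rewrite !inE; case fE: (f \in E) => //=.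
    by have := H _ fE; rewrite negbK.
  have [f1 f1E u1f1] := notall _ _ s1u s1E.
  have [f2 f2E u2f2] := notall _ _ s2u s2E.
  have f1e : f1 != e by apply: contraNneq u1f1 => ->.
  have f2e : f2 != e by apply: contraNneq u2f2 => ->.
  have u2f1 : u2 \in f1.
    apply/negPn/negP => h; have H2 := small _ f1E f1e.
    have := @card2_le (e :\: f1) u1 u2 u12; rewrite !inE u1e u2e h u1f1 => /(_ isT isT) H1.
    by have := leq_trans H1 H2.
  have u1f2 : u1 \in f2.
    apply/negPn/negP => h; have H2 := small _ f2E f2e.
    have := @card2_le (e :\: f2) u2 u1 ltac:(by rewrite eq_sym); rewrite !inE u1e u2e h u2f2 => /(_ isT isT) H1.
    by have := leq_trans H1 H2.
  have [v2 [v2e v2f1 v2f2]] := W2 _ _ f2E f1E f2e f1e u2f2 u2f1.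
  have [v1 [v1e v1f2 v1f1]] := W1 _ _ f1E f2E f1e f2e u1f1 u1f2.
  have f12 : f1 != f2 by apply: contraNneq u1f1 => ->.
  have H3 := hS _ _ f1E f2E f12.
  have uv2 : u2 != v2 by apply: contraNneq v2e => <-.
  have uv1 : u1 != v1 by apply: contraNneq v1e => <-.
  have := @card2_le (f1 :\: f2) u2 v2 uv2; rewrite !inE u2f1 u2f2 v2f1 v2f2 => /(_ isT isT) A.
  have := @card2_le (f2 :\: f1) u1 v1 uv1; rewrite !inE u1f1 u1f2 v1f1 v1f2 => /(_ isT isT) B.
  have : 2 <= minn #|f1 :\: f2| #|f2 :\: f1| by rewrite leq_min A B.
  by rewrite H3.
have cardX : #|X| <= 2.
  case: (set_0Vmem (X :\ E)) => [X0|[s sX]].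
    have : X \subset [set E].
      apply/subsetP => s sX; rewrite inE; apply/negPn/negP => sE.
      have : s \in X :\ E by rewrite in_setD1 sE sX.
      by rewrite X0 inE.
    by move/subset_leq_card; rewrite cards1 => /leq_trans; apply.
  have : X \subset [set E; s].
    apply/subsetP => t tX; rewrite !inE; case: (eqVneq t E) => //= tE.
    move: sX; rewrite in_setD1 => /andP[sE sX]; by rewrite (uniqX _ _ tX sX tE sE).
  by move/subset_leq_card; rewrite cards2 => /leq_trans; apply; case: (_ != _).
have inj : {in SS E :\: X &, injective (fun s => s :\ e)}.
  move=> s1 s2; rewrite !in_setD => /andP[s1X s1S] /andP[s2X s2S] heq.
  have key : (e \in s1) = (e \in s2).
    apply/idP/idP => h.
    - apply: contraNT s1X => h2; rewrite /X in_set s1S h /= heq.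
      have -> : s2 :\ e = s2 by apply/setP => x; rewrite !inE; case: eqVneq => // ->; rewrite (negbTE h2).
      by [].
    - apply: contraNT s2X => h2; rewrite /X in_set s2S h /= -heq.
      have -> : s1 :\ e = s1 by apply/setP => x; rewrite !inE; case: eqVneq => // ->; rewrite (negbTE h2).
      by [].
  apply/setP => x; case: (eqVneq x e) => [->//|xe].
  by have := congr1 (fun A : {set {set V}} => x \in A) heq; rewrite /= !inE xe.
have sub : [set s :\ e | s in SS E :\: X] \subset SS (E :\ e).
  apply/subsetP => t /imsetP[s]; rewrite inE => /andP[_]; rewrite !inE.
  move=> /orP[/eqP->|/orP[/eqP->|/imsetP[v _ ->]]] ->.
  - by rewrite set0D eqxx.
  - by rewrite eqxx orbT.
  - rewrite (_ : sig E v :\ e = sig (E :\ e) v) ?imset_f ?orbT //.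
    by apply/setP => f; rewrite !inE andbA.
have := subset_leq_card sub; rewrite (card_in_imset inj) => h1.
have : #|SS E :&: X| <= #|X| by apply/subset_leq_card/subsetIr.
move=> A; rewrite -(cardsID X (SS E)) addnC; apply: leq_add => //; exact: leq_trans A cardX.
Qed.

Lemma main_bound m : forall E : {set {set V}}, #|E| = m.+1 -> one_sperner E -> #|SS E| <= 2 * #|E|.
Proof.
elim: m => [|m IH] E cE hS.
  by have := subset_leq_card (SS_sub E); rewrite card_powerset cE.
have : 0 < #|E| by rewrite cE. case/card_gt0P => e0 e0E.
case: (arg_minnP (fun e : {set V} => #|e|) e0E) => e eE0 emin; have eE : e \in E by [].
have cE' : #|E :\ e| = m.+1 by have := cardsD1 e E; rewrite eE cE add1n => -[->].
have := IH _ cE' (one_sperner_sub (subsetDl E [set e]) hS).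
have := step hS eE emin; rewrite cE' cE => h1 h2.
by apply: (leq_trans h1); rewrite (mulnS 2 m.+1) [2 + _]addnC leq_add2r.
Qed.

Lemma part1 : 2 <= #|V| -> forall E : {set {set V}}, one_sperner E -> reduced_hypergraph E ->
      ceil_half (#|V| + 2) <= #|E|.
Proof.
move=> V2 E hS [nU [nI nT]].
have : 0 < #|V| by lia. case/card_gt0P => v0 _.
have En : 0 < #|E|.
  rewrite lt0n; apply/negP => /eqP/cards0_eq E0; apply: (nU v0) => e; by rewrite E0 inE.
have := main_bound (esym (prednK En)) hS.
have sinj : injective (sig E).
  move=> u v h; apply/eqP; apply/negPn/negP => uv; apply: (nT u v); split => // e eE.
  by have := congr1 (fun A : {set {set V}} => e \in A) h; rewrite /= !inE eE.
rewrite /SS cardsU1 cardsU1 (card_imset _ sinj) cardT.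
have -> : E \notin [set sig E v | v : V].
  apply/imsetP => -[v _ hv]; apply: (nU v) => e eE.
  by have := eE; rewrite hv inE => /andP[].
have -> : (set0 : {set {set V}}) \notin E |: [set sig E v | v : V].
  rewrite !inE negb_or; apply/andP; split.
    by apply/eqP => h; move: En; rewrite -h cards0.
  apply/imsetP => -[v _ hv]; have [e eE] : exists e, e \in E by apply/card_gt0P.
  apply: (nI v) => f fE; apply/negP => vf.
  have : f \in sig E v by rewrite inE fE vf.
  by rewrite -hv inE.
rewrite /ceil_half -cardT /=; lia.
Qed.
End Part1.

Section Transport.
Variables (T U : finType) (h : T -> U) (g : U -> T).
Hypotheses (hK : cancel h g) (gK : cancel g h).

Lemma mem_tr (e : {set T}) x : (x \in h @: e) = (g x \in e).
Proof.
apply/imsetP/idP => [[y ye ->]|xe]; first by rewrite hK.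
by exists (g x); rewrite ?gK.
Qed.

Lemma transport (E : {set {set T}}) :
  one_sperner E -> reduced_hypergraph E ->
  one_sperner [set h @: (e : {set T}) | e in E] /\ reduced_hypergraph [set h @: (e : {set T}) | e in E] /\
  #|[set h @: (e : {set T}) | e in E]| = #|E|.
Proof.
have hinj : injective h := can_inj hK.
have Dtr : forall e f : {set T}, h @: e :\: h @: f = h @: (e :\: f).
  by move=> e f; apply/setP => x; rewrite !inE !mem_tr !inE.
move=> hS [nU [nI nT]]; split; last split.
- move=> e' f' /imsetP[e eE ->] /imsetP[f fE ->] ef.
  rewrite !Dtr !card_imset //; apply: hS => //; apply: contraNneq ef => ->//.
- split; last split.
  + move=> u hu; apply: (nU (g u)) => e eE; rewrite -mem_tr; apply: hu; exact: imset_f.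
  + move=> u hu; apply: (nI (g u)) => e eE; rewrite -mem_tr; apply: hu; exact: imset_f.
  + move=> u v [uv hu]; apply: (nT (g u) (g v)); split.
      by apply: contra uv => /eqP/(can_inj gK)->.
    move=> e eE; rewrite -!mem_tr; apply: hu; exact: imset_f.
- by rewrite card_imset //; apply: imset_inj.
Qed.
End Transport.

Lemma transport_card (T U : finType) (E : {set {set T}}) : #|T| = #|U| ->
  one_sperner E -> reduced_hypergraph E ->
  exists E' : {set {set U}}, one_sperner E' /\ reduced_hypergraph E' /\ #|E'| = #|E|.
Proof.
move=> cTU hS hR.
pose h (x : T) : U := enum_val (cast_ord cTU (enum_rank x)).
pose g (y : U) : T := enum_val (cast_ord (esym cTU) (enum_rank y)).
have hK : cancel h g by move=> x; rewrite /h /g enum_valK cast_ordK enum_rankK.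
have gK : cancel g h by move=> y; rewrite /h /g enum_valK cast_ordKV enum_rankK.
by have [? [? ?]] := transport hK gK hS hR; eexists; eauto.
Qed.

Section Glue.
Variable T : finType.
Definition GT := option (option (T + T)).
Definition i1 (e : {set T}) : {set GT} := [set v : GT | match v with None => true | Some None => false
   | Some (Some (inl x)) => x \in e | Some (Some (inr _)) => false end].
Definition i2 (f : {set T}) : {set GT} := [set v : GT | match v with None => false | Some None => true
   | Some (Some (inl _)) => true | Some (Some (inr y)) => y \in f end].
Definition glue (E : {set {set T}}) : {set {set GT}} := (i1 @: E) :|: (i2 @: E).

Definition j1 (x : T) : GT := Some (Some (inl x)).
Definition j2 (x : T) : GT := Some (Some (inr x)).
Lemma j1_inj : injective j1. Proof. by move=> x y [->]. Qed.
Lemma j2_inj : injective j2. Proof. by move=> x y [->]. Qed.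

Lemma i1_inj : injective i1.
Proof.
move=> e f H; apply/setP => x.
by have := congr1 (fun A : {set GT} => j1 x \in A) H; rewrite /= !inE.
Qed.
Lemma i2_inj : injective i2.
Proof.
move=> e f H; apply/setP => x.
by have := congr1 (fun A : {set GT} => j2 x \in A) H; rewrite /= !inE.
Qed.

Lemma i12 e f : i1 e != i2 f.
Proof. apply/negP => /eqP H; by have := congr1 (fun A : {set GT} => None \in A) H; rewrite /= !inE. Qed.

Lemma D11 e f : #|i1 e :\: i1 f| = #|e :\: f|.
Proof.
rewrite -(card_imset (e :\: f) j1_inj); apply: eq_card => v.
case: v => [[[x|x]|]|]; rewrite ?(mem_imset _ _ j1_inj) ?inE //=; apply/esym/imsetP => -[y _] /eqP; rewrite /j1 /j2 //=.
Qed.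
Lemma D22 e f : #|i2 e :\: i2 f| = #|e :\: f|.
Proof.
rewrite -(card_imset (e :\: f) j2_inj); apply: eq_card => v.
case: v => [[[x|x]|]|]; rewrite ?(mem_imset _ _ j2_inj) ?inE //=; apply/esym/imsetP => -[y _] /eqP; rewrite /j1 /j2 //=.
Qed.
Lemma D12 e f : #|i1 e :\: i2 f| = 1.
Proof.
rewrite -(cards1 (None : GT)); apply: eq_card => v.
by case: v => [[[x|x]|]|]; rewrite !inE ?andbF.
Qed.
Lemma D21 e f : 0 < #|i2 f :\: i1 e|.
Proof. by apply/card_gt0P; exists (Some None); rewrite !inE. Qed.

Lemma glue_ok (E : {set {set T}}) : E != set0 -> one_sperner E -> reduced_hypergraph E ->
  one_sperner (glue E) /\ reduced_hypergraph (glue E) /\ #|glue E| = (#|E| + #|E|)%N.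
Proof.
case/set0Pn => e0 e0E hS [nU [nI nT]]; split; last split.
- move=> a b; rewrite !inE => /orP[]/imsetP[e eE ->] /orP[]/imsetP[f fE ->] ab.
  + rewrite !D11; apply: hS => //; apply: contraNneq ab => ->//.
  + by rewrite D12; apply/minn_idPl; exact: D21.
  + by rewrite D12; apply/minn_idPr; exact: D21.
  + rewrite !D22; apply: hS => //; apply: contraNneq ab => ->//.
- have m1 : forall e, e \in E -> i1 e \in glue E by move=> e eE; rewrite inE imset_f.
  have m2 : forall e, e \in E -> i2 e \in glue E by move=> e eE; rewrite inE imset_f ?orbT.
  split; last split.
  + move=> v hv; case: v hv => [[[x|x]|]|] hv.
    * apply: (nU x) => e eE; by have := hv _ (m1 _ eE); rewrite inE.
    * by have := hv _ (m1 _ e0E); rewrite inE.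
    * by have := hv _ (m1 _ e0E); rewrite inE.
    * by have := hv _ (m2 _ e0E); rewrite inE.
  + move=> v hv; case: v hv => [[[x|x]|]|] hv.
    * by have := hv _ (m2 _ e0E); rewrite inE.
    * apply: (nI x) => e eE; by have := hv _ (m2 _ eE); rewrite inE.
    * by have := hv _ (m2 _ e0E); rewrite inE.
    * by have := hv _ (m1 _ e0E); rewrite inE.
  + have nU' : forall x, exists2 e, e \in E & x \notin e.
      move=> x; case: (boolP [exists e in E, x \notin e]) => [/exists_inP//|/exists_inPn H].
      by exfalso; apply: (nU x) => e /H; rewrite negbK.
    have nI' : forall x, exists2 e, e \in E & x \in e.
      move=> x; case: (boolP [exists e in E, x \in e]) => [/exists_inP//|/exists_inPn H].
      by exfalso; apply: (nI x) => e /H.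
    have key : forall u v : GT, ~ (u != v /\ forall e, e \in glue E -> (u \in e) = (v \in e)) ->
       ~ twins (glue E) u v /\ ~ twins (glue E) v u.
      move=> u v H; split => -[uv hu]; apply: H; split => //.
        by rewrite eq_sym.
      by move=> e eE; rewrite hu.
    have sep : forall (e : {set GT}), e \in glue E -> forall u v, u \in e -> v \notin e ->
       ~ twins (glue E) u v /\ ~ twins (glue E) v u.
      move=> e eE u v ue ve; apply: key => -[_ hu]; by move: ve; rewrite -(hu _ eE) ue.
    move=> u v; case: u => [[[x|x]|]|]; case: v => [[[y|y]|]|].
    * move=> [xy hu]; apply: (nT x y); split; first by apply: contra xy => /eqP->.
      by move=> e eE; have := hu _ (m1 _ eE); rewrite !inE.
    * have [e eE xe] := nI' x; by first [apply: (proj1 (sep _ (m1 _ eE) (j1 x) (j2 y) _ _)) | apply: (proj2 (sep _ (m1 _ eE) (j1 x) (j2 y) _ _))]; rewrite inE.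
    * have [e eE xe] := nI' x; by first [apply: (proj1 (sep _ (m1 _ eE) (j1 x) (Some None) _ _)) | apply: (proj2 (sep _ (m1 _ eE) (j1 x) (Some None) _ _))]; rewrite inE.
    * have [e eE xe] := nU' x; by first [apply: (proj1 (sep _ (m1 _ eE) None (j1 x) _ _)) | apply: (proj2 (sep _ (m1 _ eE) None (j1 x) _ _))]; rewrite inE.
    * have [e eE xe] := nI' y; by first [apply: (proj1 (sep _ (m1 _ eE) (j1 y) (j2 x) _ _)) | apply: (proj2 (sep _ (m1 _ eE) (j1 y) (j2 x) _ _))]; rewrite inE.
    * move=> [xy hu]; apply: (nT x y); split; first by apply: contra xy => /eqP->.
      by move=> e eE; have := hu _ (m2 _ eE); rewrite !inE.
    * have [e eE xe] := nU' x; by first [apply: (proj1 (sep _ (m2 _ eE) (Some None) (j2 x) _ _)) | apply: (proj2 (sep _ (m2 _ eE) (Some None) (j2 x) _ _))]; rewrite inE.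
    * by first [apply: (proj1 (sep _ (m1 _ e0E) None (j2 x) _ _)) | apply: (proj2 (sep _ (m1 _ e0E) None (j2 x) _ _))]; rewrite inE.
    * have [e eE xe] := nI' y; by first [apply: (proj1 (sep _ (m1 _ eE) (j1 y) (Some None) _ _)) | apply: (proj2 (sep _ (m1 _ eE) (j1 y) (Some None) _ _))]; rewrite inE.
    * have [e eE xe] := nU' y; by first [apply: (proj1 (sep _ (m2 _ eE) (Some None) (j2 y) _ _)) | apply: (proj2 (sep _ (m2 _ eE) (Some None) (j2 y) _ _))]; rewrite inE.
    * by move=> [].
    * by first [apply: (proj1 (sep _ (m1 _ e0E) None (Some None) _ _)) | apply: (proj2 (sep _ (m1 _ e0E) None (Some None) _ _))]; rewrite inE.
    * have [e eE xe] := nU' y; by first [apply: (proj1 (sep _ (m1 _ eE) None (j1 y) _ _)) | apply: (proj2 (sep _ (m1 _ eE) None (j1 y) _ _))]; rewrite inE.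
    * by first [apply: (proj1 (sep _ (m1 _ e0E) None (j2 y) _ _)) | apply: (proj2 (sep _ (m1 _ e0E) None (j2 y) _ _))]; rewrite inE.
    * by first [apply: (proj1 (sep _ (m1 _ e0E) None (Some None) _ _)) | apply: (proj2 (sep _ (m1 _ e0E) None (Some None) _ _))]; rewrite inE.
    * by move=> [].
- rewrite /glue cardsU (card_imset _ i1_inj) (card_imset _ i2_inj).
  have -> : i1 @: E :&: i2 @: E = set0.
    apply/setP => a; rewrite !inE; apply/negP => /andP[/imsetP[e _ ->] /imsetP[f _ /eqP]].
    by rewrite (negbTE (i12 e f)).
  by rewrite cards0 subn0.
Qed.
End Glue.
Lemma construct j : exists E : {set {set 'I_(2 ^ j.+1 - 2)}},
  one_sperner E /\ reduced_hypergraph E /\ #|E| = 2 ^ j.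
Proof.
elim: j => [|j [E [hS [hR cE]]]].
  exists [set set0]; split; last split.
  - by move=> e f; rewrite !inE => /eqP-> /eqP->; rewrite eqxx.
  - by split; last split => [[]|] //; move=> [].
  - by rewrite cards1.
have E0 : E != set0 by apply/set0Pn/card_gt0P; rewrite cE expn_gt0.
have [gS [gR gc]] := glue_ok E0 hS hR.
have ct : #|{: option (option ('I_(2 ^ j.+1 - 2) + 'I_(2 ^ j.+1 - 2)))}| = #|'I_(2 ^ j.+2 - 2)|.
  rewrite !card_option card_sum !card_ord.
  have : 2 <= 2 ^ j.+1 by rewrite expnS leq_pmulr // expn_gt0.
  rewrite (expnS 2 j.+1); lia.
have [E' [h1 [h2 h3]]] := @transport_card (GT 'I_(2 ^ j.+1 - 2)) _ _ ct gS gR.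
exists E'; split => //; split => //; rewrite h3 gc cE.
by rewrite (expnS 2 j) mul2n addnn.
Qed.

Theorem proposition17 :
  (forall (V : finType) (E : {set {set V}}),
      2 <= #|V| -> one_sperner E -> reduced_hypergraph E ->
      ceil_half (#|V| + 2) <= #|E|)
  /\
  (forall k : nat, 2 <= k ->
      exists E : {set {set 'I_(2 ^ k - 2)}},
        one_sperner E /\ reduced_hypergraph E /\
        #|'I_(2 ^ k - 2)| = 2 ^ k - 2 /\
        #|E| = 2 ^ k.-1 /\ 2 ^ k.-1 = ceil_half (#|'I_(2 ^ k - 2)| + 2)).
Proof.
split.
  by move=> V E V2 hS hR; apply: part1.
case=> // j j1.
have [E [hS [hR cE]]] := construct j.
exists E; split => //; split => //; rewrite card_ord; split => //; split => //=.
rewrite /ceil_half.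
have : 1 <= 2 ^ j by rewrite expn_gt0.
rewrite expnS; lia.
Qed.
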